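(* Let $u\ge1$ be an integer, $H$ a graph containing $K_u$, and $\mathcal{F}$ a set of connected graphs none of which is a subgraph of $K_u$. Suppose there is an $\mathcal{F}$-free graph $L$ with $k^u(L)\ge1$, $\mathcal{N}(H,L)\ge1$, and $\rho_u(H,L)=P_u(H,\mathcal{F})$. For each $p\ge1$ write $p=q\,k^u(L)+r$ with integers $q\ge0$, $0\le r<k^u(L)$. Then \[ \lim_{p\to\infty}\frac{\mathrm{ex}_u(p,H,\mathcal{F})}{\mathcal{N}(H,qL\cup rK_u)}=1\quad\text{and}\quad \lim_{p\to\infty}\frac{\mathrm{ex}_u(p,H,\mathcal{F})}{\frac{\mathcal{N}(H,L)}{k^u(L)}\,p}=1 . \] Moreover, whenever $k^u(L)$ divides $p$, $\mathrm{ex}_u(p,H,\mathcal{F})=\mathcal{N}\big(H,\frac{p}{k^u(L)}L\big)$.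
   Context: All graphs are finite and simple. $\mathcal{N}(H,G)$ is the number of (not necessarily induced) subgraphs of $G$ isomorphic to $H$; $k^u(G)=\mathcal{N}(K_u,G)$. A graph is $\mathcal{F}$-free if it has no subgraph isomorphic to a member of $\mathcal{F}$. $\mathrm{ex}_u(p,H,\mathcal{F})\in[0,\infty]$ is the supremum of $\mathcal{N}(H,G)$ over all $\mathcal{F}$-free graphs $G$ with $k^u(G)=p$. $\rho_u(H,G)=\mathcal{N}(H,G)/k^u(G)$. $P_u(H,\mathcal{F})=\lim_{p\to\infty}\mathrm{ex}_u(p,H,\mathcal{F})/p$ (this limit exists in $[0,\infty]$ under the stated hypotheses). $qL\cup rK_u$ denotes the disjoint union of $q$ copies of $L$ and $r$ copies of $K_u$. *)

(* Defs.v *)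
From HB Require Import structures.
From mathcomp Require Import all_boot all_order all_algebra.
From mathcomp Require Import all_classical all_reals all_analysis.
Set Implicit Arguments. Unset Strict Implicit. Unset Printing Implicit Defensive.
Import Order.TTheory GRing.Theory Num.Theory.

Record graph := Graph {
  gV :> finType;
  gadj : rel gV;
  gsym : symmetric gadj;
  girr : irreflexive gadj }.

Arguments gadj {g}.

(* S (vertex set) together with E (edge set, as 2-element vertex sets) is a
   subgraph of G isomorphic to H. *)
Definition is_edge (G : graph) (e : {set gV G}) : bool :=
  [exists x : gV G, exists y : gV G, gadj x y && (e == [set x; y])].

Definition is_copy (H G : graph) (S : {set gV G}) (E : {set {set gV G}}) : bool :=
  [forall e in E, is_edge e && (e \subset S)] &&
  [exists f : {ffun gV H -> gV G},
     [&& injectiveb f, f @: setT == S &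
         [forall x : gV H, forall y : gV H, gadj x y == ([set f x; f y] \in E)]]].

(* N(H,G): number of (not necessarily induced) subgraphs of G isomorphic to H *)
Definition Ncount (H G : graph) : nat :=
  #|[set SE : {set gV G} * {set {set gV G}} | is_copy H SE.1 SE.2]|.

Lemma K_sym (u : nat) : symmetric (fun i j : 'I_u => i != j).
Proof. by move=> i j; rewrite eq_sym. Qed.
Lemma K_irr (u : nat) : irreflexive (fun i j : 'I_u => i != j).
Proof. by move=> i; rewrite eqxx. Qed.
Definition Kgraph (u : nat) : graph := @Graph 'I_u _ (@K_sym u) (@K_irr u).

Definition ku (u : nat) (G : graph) : nat := Ncount (Kgraph u) G.

Definition union_adj (G1 G2 : graph) : rel (gV G1 + gV G2)%type :=
  fun a b => match a, b with
             | inl x, inl y => gadj x y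
             | inr x, inr y => gadj x y
             | _, _ => false end.
Lemma union_sym G1 G2 : symmetric (@union_adj G1 G2).
Proof. by case=> x [] y //=; rewrite gsym. Qed.
Lemma union_irr G1 G2 : irreflexive (@union_adj G1 G2).
Proof. by case=> x /=; rewrite girr. Qed.
Definition gunion (G1 G2 : graph) : graph :=
  @Graph (gV G1 + gV G2)%type _ (@union_sym G1 G2) (@union_irr G1 G2).

Definition copies_adj (q : nat) (G : graph) : rel ('I_q * gV G)%type :=
  fun a b => (a.1 == b.1) && gadj a.2 b.2.
Lemma copies_sym q G : symmetric (@copies_adj q G).
Proof. by move=> a b; rewrite /copies_adj eq_sym gsym. Qed.
Lemma copies_irr q G : irreflexive (@copies_adj q G).
Proof. by move=> a; rewrite /copies_adj girr andbF. Qed.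
Definition copies (q : nat) (G : graph) : graph :=
  @Graph ('I_q * gV G)%type _ (@copies_sym q G) (@copies_irr q G).

Definition connected_graph (G : graph) : bool :=
  (0 < #|gV G|) && [forall x : gV G, forall y : gV G, connect gadj x y].

Definition Ffree (F : graph -> Prop) (G : graph) : Prop :=
  forall F0, F F0 -> Ncount F0 G = 0%N.

Local Open Scope ring_scope.
Local Open Scope ereal_scope.

(* ex_u(p,H,F) in [0, +oo]: supremum of N(H,G) over F-free G with k^u(G) = p
   (supremum of the empty set in [0,+oo] is 0). *)
Definition exu (R : realType) (u p : nat) (H : graph) (F : graph -> Prop) : \bar R :=
  ereal_sup ([set 0] `|`
    [set x | exists G : graph, [/\ Ffree F G, ku u G = p & x = ((Ncount H G)%:R)%:E]]).

Definition rhou (R : realType) (u : nat) (H G : graph) : R :=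
  ((Ncount H G)%:R / (ku u G)%:R)%R.

Definition Pu (R : realType) (u : nat) (H : graph) (F : graph -> Prop) : \bar R :=
  limn (fun p : nat => exu R u p H F * ((p%:R)^-1)%:E).

(* Main.v *)
Require Import Defs.
From HB Require Import structures.
From mathcomp Require Import all_boot all_order all_algebra.
From mathcomp Require Import all_classical all_reals all_analysis.
From mathcomp Require Import ring lra.
Import Order.TTheory GRing.Theory Num.Theory.
Set Implicit Arguments. Unset Strict Implicit. Unset Printing Implicit Defensive.

Lemma memT (T : finType) (x : T) : x \in (setT : set T).
Proof. by rewrite in_setT. Qed.
Hint Resolve memT : core.

Definition ghom (H G : graph) (f : gV H -> gV G) :=
  forall x y, gadj x y -> gadj (f x) (f y).

Definition Ef (H G : graph) (f : gV H -> gV G) : {set {set gV G}} :=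
  [set e | [exists x, exists y, gadj x y && (e == [set f x; f y])]].

Lemma set2_eq (T : finType) (a b c d : T) :
  [set a; b] = [set c; d] -> c != d -> (a = c /\ b = d) \/ (a = d /\ b = c).
Proof.
move=> E ncd.
have ha : a \in [set c; d] by rewrite -E set21.
have hb : b \in [set c; d] by rewrite -E set22.
have hc : c \in [set a; b] by rewrite E set21.
have hd : d \in [set a; b] by rewrite E set22.
move: ha hb hc hd; rewrite !finset.inE.
case/orP=> /eqP ha; case/orP=> /eqP hb; subst.
- by move=> _; rewrite orbb => /eqP hd; rewrite hd eqxx in ncd.
- by left.
- by right.
- by move=> /orP[]/eqP hc _; rewrite hc eqxx in ncd.
Qed.

Lemma adj_neq (G : graph) (a b : gV G) : gadj a b -> a != b.
Proof. by apply: contraTneq => ->; rewrite girr. Qed.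

Lemma copyP (H G : graph) (S : {set gV G}) (E : {set {set gV G}}) :
  is_copy H S E <-> exists f : gV H -> gV G,
    [/\ injective f, ghom f, S = f @: setT & E = Ef f].
Proof.
split.
- case/andP=> /forall_inP hE /existsP [f /and3P [/injectiveP finj /eqP hS /forallP hadj]].
  have hxy : forall x y, gadj x y = ([set f x; f y] \in E).
    by move=> x y; apply/eqP; exact: (forallP (hadj x) y).
  exists f; split => //.
  + move=> x y axy; have := axy; rewrite hxy => /hE /andP[/existsP[a /existsP[b /andP[ab /eqP e]]] _].
    case: (set2_eq e (adj_neq ab)) => [[-> ->]|[-> ->]] //; by rewrite gsym.
  + apply/setP => e; rewrite /Ef finset.in_set; apply/idP/idP.
    * move=> he; have := hE _ he => /andP[/existsP[a /existsP[b /andP[ab /eqP ee]]] sub].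
      have : a \in S by have := fintype.subsetP sub a; apply; rewrite ee set21.
      have : b \in S by have := fintype.subsetP sub b; apply; rewrite ee set22.
      subst e; rewrite -hS => /imsetP[y _ eb] /imsetP[x _ ea]; subst a b.
      apply/existsP; exists x; apply/existsP; exists y; rewrite eqxx andbT hxy.
      by [].
    * case/existsP=> x /existsP[y /andP[axy /eqP ->]]; by rewrite -hxy.
- case=> f [finj fhom -> ->]; apply/andP; split.
  + apply/forall_inP => e; rewrite finset.inE => /existsP[x /existsP[y /andP[axy /eqP ->]]].
    apply/andP; split.
    * by apply/existsP; exists (f x); apply/existsP; exists (f y); rewrite (fhom _ _ axy) eqxx.
    * by apply/fintype.subsetP => z; rewrite !finset.inE => /orP[]/eqP ->; apply: imset_f.
  + apply/existsP; exists [ffun x => f x]; apply/and3P; split.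
    * by apply/injectiveP => x y; rewrite !ffunE; apply: finj.
    * by apply/eqP; apply: eq_imset => x; rewrite ffunE.
    * apply/forallP => x; apply/forallP => y; rewrite !ffunE; apply/eqP.
      apply/idP/idP.
      - move=> axy; rewrite finset.inE; apply/existsP; exists x; apply/existsP; exists y.
        by rewrite axy eqxx.
      - rewrite finset.inE => /existsP[x' /existsP[y' /andP[a' /eqP e]]].
        case: (set2_eq e (adj_neq (fhom _ _ a'))) => [[/finj -> /finj ->]|[/finj -> /finj ->]] //.
        by rewrite gsym.
Qed.

Definition CS (H G : graph) :=
  [set SE : {set gV G} * {set {set gV G}} | is_copy H SE.1 SE.2].

Lemma NcountE H G : Ncount H G = #|CS H G|. Proof. by []. Qed.

Lemma inCS H G (f : gV H -> gV G) : injective f -> ghom f -> (f @: setT, Ef f) \in CS H G.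
Proof. by move=> fi fh; rewrite finset.inE /=; apply/copyP; exists f. Qed.

Lemma CSP H G SE : SE \in CS H G ->
  exists f : gV H -> gV G, [/\ injective f, ghom f & SE = (f @: setT, Ef f)].
Proof.
case: SE => S E; rewrite finset.inE /= => /copyP [f [fi fh -> ->]]; by exists f.
Qed.

Definition Phi (G1 G : graph) (phi : gV G1 -> gV G)
  (SE : {set gV G1} * {set {set gV G1}}) : {set gV G} * {set {set gV G}} :=
  (phi @: SE.1, (fun e : {set gV G1} => phi @: e) @: SE.2).

Lemma Ef_eq (H G : graph) (f g : gV H -> gV G) : f =1 g -> Ef f = Ef g.
Proof. by move=> fg; apply/setP => e; rewrite !finset.inE; under eq_existsb do under eq_existsb do rewrite !fg. Qed.

Lemma PhiE (H G1 G : graph) (phi : gV G1 -> gV G) (f : gV H -> gV G1) :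
  Phi phi (f @: setT, Ef f) = ((phi \o f) @: setT, Ef (phi \o f)).
Proof.
rewrite /Phi /=; congr pair; first by rewrite -imset_comp.
apply/setP => e; apply/imsetP/idP.
- case=> e' ; rewrite /Ef finset.inE => /existsP[x /existsP[y /andP[axy /eqP ->]]] ->.
  rewrite /Ef finset.inE; apply/existsP; exists x; apply/existsP; exists y.
  by rewrite axy /= imsetU1 imset_set1 eqxx.
- rewrite /Ef finset.inE => /existsP[x /existsP[y /andP[axy /eqP ->]]].
  exists [set f x; f y]; last by rewrite imsetU1 imset_set1.
  by rewrite /Ef finset.inE; apply/existsP; exists x; apply/existsP; exists y; rewrite axy eqxx.
Qed.

Lemma Phi_inj (G1 G : graph) (phi : gV G1 -> gV G) : injective phi -> injective (Phi phi).
Proof.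
move=> pi [S1 E1] [S2 E2]; rewrite /Phi /= => -[/(imset_inj pi) -> /(imset_inj (imset_inj pi)) ->].
by [].
Qed.

Lemma Phi_CS H (G1 G : graph) (phi : gV G1 -> gV G) : injective phi -> ghom phi ->
  forall SE, SE \in CS H G1 -> Phi phi SE \in CS H G.
Proof.
move=> pi ph SE /CSP [f [fi fh ->]]; rewrite PhiE; apply: inCS.
- exact: inj_comp.
- by move=> x y /fh /ph.
Qed.

Lemma conn_side (H G : graph) (T : eqType) (s : gV G -> T) (f : gV H -> gV G) :
  connected_graph H -> ghom f -> (forall a b, gadj a b -> s a = s b) ->
  forall x y, s (f x) = s (f y).
Proof.
move=> /andP[_ /forallP hc] fh hs x y.
have cl : fingraph.closed gadj [pred z | s (f z) == s (f x)].
  by move=> z w /fh /hs hzw; rewrite !finset.inE hzw.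
have := closed_connect cl (forallP (hc x) y); rewrite !finset.inE eqxx => /esym /eqP.
by move=> ->.
Qed.

Lemma conn_pos H : connected_graph H -> exists h : gV H, True.
Proof. by case/andP=> /card_gt0P [h _] _; exists h. Qed.

Definition linl G1 G2 : gV G1 -> gV (gunion G1 G2) := inl.
Definition linr G1 G2 : gV G2 -> gV (gunion G1 G2) := inr.
Lemma inl_inj G1 G2 : injective (@linl G1 G2). Proof. by move=> x y []. Qed.
Lemma inr_inj G1 G2 : injective (@linr G1 G2). Proof. by move=> x y []. Qed.
Lemma inl_hom G1 G2 : ghom (@linl G1 G2). Proof. by []. Qed.
Lemma inr_hom G1 G2 : ghom (@linr G1 G2). Proof. by []. Qed.

Lemma N_union_ge H G1 G2 : (Ncount H G1 <= Ncount H (gunion G1 G2))%N.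
Proof.
rewrite !NcountE -(card_imset _ (Phi_inj (@inl_inj G1 G2))).
apply: subset_leq_card; apply/fintype.subsetP => z /imsetP[SE hSE ->].
exact: Phi_CS (@inl_inj G1 G2) (@inl_hom G1 G2) _ hSE.
Qed.

Lemma N_union_conn H G1 G2 : connected_graph H ->
  Ncount H (gunion G1 G2) = (Ncount H G1 + Ncount H G2)%N.
Proof.
move=> hc; have [h _] := conn_pos hc.
set A := Phi (@linl G1 G2) @: CS H G1.
set B := Phi (@linr G1 G2) @: CS H G2.
have hAB : CS H (gunion G1 G2) = A :|: B.
  apply/setP => SE; apply/idP/idP.
  - move=> /CSP [f [fi fh ->]].
    pose s (z : gV (gunion G1 G2)) := if z is inl _ then true else false.
    have hs : forall a b, gadj a b -> s a = s b by case=> a [] b.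
    have hside := @conn_side _ _ _ s f hc fh hs.
    case E0: (f h) => [a0|b0].
    + pose g x := if f x is inl a then a else a0.
      have fg : forall x, f x = inl (g x).
        move=> x; rewrite /g; have := hside x h; rewrite E0; by case: (f x).
      apply/setUP; left; apply/imsetP; exists (g @: setT, Ef g).
        apply: inCS; first by move=> x y e; apply: fi; rewrite !fg e.
        by move=> x y /fh; rewrite !fg.
      rewrite PhiE; congr pair; [apply: eq_imset | apply: Ef_eq] => x /=; by rewrite fg.
    + pose g x := if f x is inr a then a else b0.
      have fg : forall x, f x = inr (g x).
        move=> x; rewrite /g; have := hside x h; rewrite E0; by case: (f x).
      apply/setUP; right; apply/imsetP; exists (g @: setT, Ef g).
        apply: inCS; first by move=> x y e; apply: fi; rewrite !fg e.
        by move=> x y /fh; rewrite !fg.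
      rewrite PhiE; congr pair; [apply: eq_imset | apply: Ef_eq] => x /=; by rewrite fg.
  - case/setUP => /imsetP[SE' h' ->].
    + exact: Phi_CS (@inl_inj G1 G2) (@inl_hom G1 G2) _ h'.
    + exact: Phi_CS (@inr_inj G1 G2) (@inr_hom G1 G2) _ h'.
have hdis : #|A :&: B| = 0%N.
  apply: eq_card0 => SE; apply/negbTE/negP; case/setIP => /imsetP[a ha ->] /imsetP[b hb e].
  case/CSP: ha e => f [_ _ ->] e.
  have : inl (f h) \in (Phi (@linl G1 G2) (f @: setT, Ef f)).1.
    by apply/imsetP; exists (f h) => //; apply: imset_f.
  by rewrite e => /imsetP [z _].
rewrite NcountE hAB cardsU hdis subn0 !card_imset //.
- exact: Phi_inj (@inr_inj G1 G2).
- exact: Phi_inj (@inl_inj G1 G2).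
Qed.

Definition emb m (G : graph) (i : 'I_m) : gV G -> gV (copies m G) := fun x => (i, x).
Lemma emb_inj m G i : injective (@emb m G i). Proof. by move=> x y []. Qed.
Lemma emb_hom m G i : ghom (@emb m G i).
Proof. by move=> x y a; rewrite /= /copies_adj /= eqxx. Qed.

Definition Psi m (G : graph) (p : 'I_m * ({set gV G} * {set {set gV G}})) :=
  Phi (@emb m G p.1) p.2.

Lemma Psi_inj H m G : (exists h : gV H, True) ->
  {in finset.setX [set: 'I_m]%SET (CS H G) &, injective (@Psi m G)}.
Proof.
case=> h _ [i a] [j b]; rewrite !finset.in_setX /= => /andP[_ ha] /andP[_ hb] e.
have ij : i = j.
  case/CSP: ha e => f [_ _ ->] e.
  have : (i, f h) \in (Psi (i, (f @: setT, Ef f))).1.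
    by apply/imsetP; exists (f h) => //; apply: imset_f.
  by rewrite e => /imsetP [z _ [->]].
subst j; congr pair; exact: (Phi_inj (@emb_inj m G i)) e.
Qed.

Lemma N_copies_ge H G m : (exists h : gV H, True) ->
  (m * Ncount H G <= Ncount H (copies m G))%N.
Proof.
move=> hh; rewrite !NcountE.
have -> : (m * #|CS H G| = #|@Psi m G @: finset.setX [set: 'I_m]%SET (CS H G)|)%N.
  by rewrite (card_in_imset (Psi_inj hh)) cardsX cardsT card_ord.
apply: subset_leq_card; apply/fintype.subsetP => z /imsetP[[i SE] hSE ->].
rewrite finset.in_setX /= in hSE; case/andP: hSE => _ hSE.
exact: Phi_CS (@emb_inj m G i) (@emb_hom m G i) _ hSE.
Qed.

Lemma N_copies_conn H G m : connected_graph H ->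
  Ncount H (copies m G) = (m * Ncount H G)%N.
Proof.
move=> hc; have hh := conn_pos hc; case: (hh) => h _.
apply/eqP; rewrite eqn_leq N_copies_ge // andbT !NcountE.
rewrite -[X in (_ <= X * _)%N]card_ord -cardsT -cardsX -(card_in_imset (Psi_inj hh)).
apply: subset_leq_card; apply/fintype.subsetP => SE /CSP [f [fi fh ->]].
pose s (z : gV (copies m G)) := z.1.
have hs : forall a b, gadj a b -> s a = s b by move=> a b /andP [/eqP].
have hside := @conn_side _ _ _ s f hc fh hs.
pose i := (f h).1; pose g x := (f x).2.
have fg : forall x, f x = (i, g x).
  by move=> x; have := hside x h; rewrite /s /g /i => <-; exact: surjective_pairing.
apply/imsetP; exists (i, (g @: setT, Ef g)).
  rewrite finset.in_setX /= finset.in_setT /=; apply: inCS.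
  - by move=> x y e; apply: fi; rewrite !fg e.
  - by move=> x y /fh; rewrite !fg => /andP [_].
rewrite /Psi /= PhiE; congr pair; first by apply: eq_imset => x /=; rewrite fg.
exact: (@Ef_eq H (copies m G) f (emb i \o g) fg).
Qed.

Lemma K_conn u : (0 < u)%N -> connected_graph (Kgraph u).
Proof.
move=> u0; apply/andP; split; first by rewrite card_ord.
apply/forallP => x; apply/forallP => y.
case: (eqVneq x y) => [->|nxy]; first exact: connect0.
by apply: connect1.
Qed.

Lemma ku_K u : (0 < u)%N -> ku u (Kgraph u) = 1%N.
Proof.
move=> u0; rewrite /ku NcountE.
have -> : CS (Kgraph u) (Kgraph u) = [set (id @: setT, Ef (id : gV (Kgraph u) -> gV (Kgraph u)))].
  apply/setP => SE; rewrite finset.in_set1; apply/idP/idP.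
  - move=> /CSP [f [fi fh ->]].
    have [g fK gK] := injF_bij fi.
    apply/eqP; congr pair.
    + apply/setP => y; apply/imsetP/imsetP => _; first by exists y.
      by exists (g y) => //; rewrite gK.
    + apply/setP => e; rewrite /Ef !finset.inE; apply/existsP/existsP.
      * case=> x /existsP [y /andP [axy /eqP ->]]; exists (f x); apply/existsP; exists (f y).
        by rewrite /= eqxx andbT (inj_eq fi).
      * case=> a /existsP [b /andP [ab /eqP ->]]; exists (g a); apply/existsP; exists (g b).
        by rewrite !gK eqxx andbT /= (can_eq gK).
  - by move/eqP ->; apply: inCS.
by rewrite cards1.
Qed.

Unset Implicit Arguments. Set Strict Implicit.
Import numFieldNormedType.Exports.
Local Open Scope ring_scope.
Local Open Scope classical_set_scope.
Local Open Scope ereal_scope.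

Lemma Ffree_union (F : graph -> Prop) G1 G2 : (forall F0, F F0 -> connected_graph F0) ->
  Ffree F G1 -> Ffree F G2 -> Ffree F (gunion G1 G2).
Proof. by move=> hc h1 h2 F0 hF; rewrite N_union_conn ?h1 ?h2 //; exact: hc. Qed.

Lemma Ffree_copies (F : graph -> Prop) G m : (forall F0, F F0 -> connected_graph F0) ->
  Ffree F G -> Ffree F (copies m G).
Proof. by move=> hc h F0 hF; rewrite N_copies_conn ?h ?muln0 //; exact: hc. Qed.

Lemma ku_union u G1 G2 : (0 < u)%N -> ku u (gunion G1 G2) = (ku u G1 + ku u G2)%N.
Proof. by move=> u0; apply: N_union_conn; apply: K_conn. Qed.

Lemma ku_copies u G m : (0 < u)%N -> ku u (copies m G) = (m * ku u G)%N.
Proof. by move=> u0; apply: N_copies_conn; apply: K_conn. Qed.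

Lemma H_nonempty u H : (1 <= u)%N -> (1 <= ku u H)%N -> exists h : gV H, True.
Proof.
move=> u0; rewrite /ku NcountE => /card_gt0P [SE /CSP [f _]].
by exists (f (Ordinal u0)).
Qed.

Lemma exu_ge (R : realType) u p H F G : Ffree F G -> ku u G = p ->
  ((Ncount H G)%:R)%:E <= exu R u p H F.
Proof. by move=> hG hk; apply: ereal_sup_ubound; right; exists G. Qed.

Lemma exu_le (R : realType) u p H F (c : R) : (0 <= c)%R ->
  (forall G, Ffree F G -> ku u G = p -> ((Ncount H G)%:R <= c)%R) ->
  exu R u p H F <= c%:E.
Proof.
move=> c0 hc; apply: ge_ereal_sup => x [-> | [G [hG hk ->]]]; rewrite lee_fin //.
exact: hc.
Qed.

Lemma keyU (R : realType) (u : nat) (H : graph) (F : graph -> Prop) (rho : R) :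
  (0 < u)%N -> (forall F0, F F0 -> connected_graph F0) -> (exists h : gV H, True) ->
  (fun p : nat => exu R u p H F * ((p%:R)^-1)%:E) @ \oo --> rho%:E ->
  forall G p, Ffree F G -> ku u G = p -> (0 < p)%N ->
    ((Ncount H G)%:R <= rho * p%:R)%R.
Proof.
move=> u0 hFc hH hcv G p hG hk p0.
pose N := Ncount H G.
pose b := fun j : nat => exu R u (j.+1 * p)%N H F * (((j.+1 * p)%N%:R)^-1)%:E.
have hb : b j @[j --> \oo] --> rho%:E.
  apply: cvg_comp hcv => P [N0 _ hN0]; exists N0 => // j /= hj; apply: hN0 => /=.
  by apply: leq_trans hj _; rewrite (leq_trans (leqnSn j)) // leq_pmulr.
have hlow : forall j, ((N%:R / p%:R)%R)%:E <= b j.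
  move=> j; rewrite /b.
  have hk' : ku u (copies j.+1 G) = (j.+1 * p)%N by rewrite ku_copies // hk.
  have h1 := @exu_ge R u (j.+1 * p)%N H F _ (@Ffree_copies F G j.+1 hFc hG) hk'.
  have h2 : (j.+1 * N <= Ncount H (copies j.+1 G))%N := @N_copies_ge H G j.+1 hH.
  have e1 : (N%:R / p%:R = (j.+1 * N)%N%:R * ((j.+1 * p)%N%:R)^-1 :> R)%R.
    rewrite !natrM; field; apply/andP; split; first by rewrite pnatr_eq0 -lt0n.
    by rewrite addrC natr1 pnatr_eq0.
  rewrite e1 EFinM; apply: lee_wpmul2r; first by rewrite lee_fin invr_ge0 ler0n.
  by apply: le_trans h1; rewrite lee_fin ler_nat.
have := lime_ge (cvgP _ hb) (nearW _ hlow).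
rewrite (cvg_lim (@ereal_hausdorff R) hb) lee_fin => hle.
have p0' : (0 < p%:R :> R)%R by rewrite ltr0n.
have {}hle := hle ltac:(exact: _) ltac:(exact: _).
by rewrite -ler_pdivrMr.
Qed.

Lemma bracket (R : realType) (x : \bar R) (a b : R) : a%:E <= x -> x <= b%:E ->
  exists y, x = y%:E /\ (a <= y <= b)%R.
Proof.
case: x => [y||] //=; rewrite ?lee_fin.
by move=> h1 h2; exists y; rewrite h1 h2.
Qed.

Lemma ratio_bounds (R : realFieldType) (e M n k q r : R) : (0 < n)%R -> (0 < k)%R -> (1 <= q)%R -> (0 <= r)%R -> (r <= k)%R -> (q*n <= M)%R -> (M <= e)%R -> (e <= n/k*(q*k+r))%R ->
  (`|1 - e/M| <= q^-1)%R /\ (`|1 - e/(n/k*(q*k+r))| <= q^-1)%R.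
Proof.
move=> n0 k0 q1 r0 rk qM Me eD.
have q0 : (0 < q)%R by lra.
have M0 : (0 < M)%R by nra.
have hD : (n/k*(q*k+r) = n*q + n*(r/k))%R by field; lra.
have rk1 : (r/k <= 1)%R by rewrite ler_pdivrMr // mul1r.
have rk0 : (0 <= r/k)%R by apply: divr_ge0; lra.
have D0 : (0 < n/k*(q*k+r))%R by rewrite hD; nra.
have qi0 : (0 < q^-1)%R by rewrite invr_gt0.
have qq : (q * q^-1 = 1)%R by rewrite mulfV //; lra.
split.
- have h1 : (1 <= e/M)%R by rewrite ler_pdivlMr // mul1r.
  rewrite ler0_norm; last by lra.
  suff : (e / M <= 1 + q^-1)%R by lra.
  rewrite ler_pdivrMr //; rewrite hD in eD.
  have : (n <= q^-1 * M)%R.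
    by rewrite -(ler_pM2l q0) mulrA qq mul1r.
  nra.
- have h1 : (e/(n/k*(q*k+r)) <= 1)%R by rewrite ler_pdivrMr // mul1r.
  rewrite ger0_norm; last by lra.
  suff : (1 - q^-1 <= e/(n/k*(q*k+r)))%R by lra.
  rewrite ler_pdivlMr //; rewrite hD.
  have : (0 <= 1 - q^-1)%R.
    rewrite subr_ge0 -[X in (X <= _)%R](mul1r) ler_pdivrMr //; lra.
  nra.
Qed.

Lemma sq_cvg (R : realType) (a : nat -> R) (k : nat) : (0 < k)%N ->
  (forall p, (k <= p)%N -> (`|1 - a p| <= ((p %/ k)%:R)^-1)%R) -> a n @[n --> \oo] --> (1%R : R).
Proof.
move=> k0 hb; apply/cvgrPdist_le => eps eps0.
pose T := (Num.Def.truncn (eps^-1)).+1.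
exists (T * k)%N => // p /= hp.
have kp : (k <= p)%N by apply: leq_trans hp; rewrite leq_pmull.
apply: le_trans (hb p kp) _.
have Tq : (T <= p %/ k)%N by rewrite leq_divRL.
have : (eps^-1 < T%:R)%R by apply: truncnS_gt.
move=> hT.
have : (T%:R <= (p %/ k)%:R :> R)%R by rewrite ler_nat.
move=> hTq.
have q0 : (0 < (p %/ k)%:R :> R)%R by rewrite ltr0n; apply: leq_trans Tq.
rewrite -(invrK eps) lef_pV2 ?posrE ?invr_gt0 //.
apply: ltW; apply: lt_le_trans hT hTq.
Qed.

Theorem mainTheorem6 (R : realType) (u : nat) (H : graph) (F : graph -> Prop)
  (L : graph) :
  (1 <= u)%N ->
  (1 <= ku u H)%N ->
  (forall F0, F F0 -> connected_graph F0 /\ Ncount F0 (Kgraph u) = 0%N) ->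
  Ffree F L ->
  (1 <= ku u L)%N ->
  (1 <= Ncount H L)%N ->
  (rhou R u H L)%:E = Pu R u H F ->
  [/\ (fun p : nat =>
         exu R u p H F *
         ((Ncount H (gunion (copies (p %/ ku u L) L)
                            (copies (p %% ku u L) (Kgraph u))))%:R^-1)%:E)
        @ \oo --> 1,
      (fun p : nat =>
         exu R u p H F *
         ((((Ncount H L)%:R / (ku u L)%:R) * p%:R)^-1)%:E)
        @ \oo --> 1
    & forall p : nat, (0 < p)%N -> (ku u L %| p)%N ->
        exu R u p H F = ((Ncount H (copies (p %/ ku u L) L))%:R)%:E ].
Proof.
move=> u1 kH hF fL kL nL hrho.
have hFc : forall F0, F F0 -> connected_graph F0 by move=> F0 /hF [].
have u0 : (0 < u)%N by [].
have hH := @H_nonempty u H u1 kH.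
have fK : Ffree F (Kgraph u) by move=> F0 /hF [].
set k := ku u L in kL hrho *.
set n := Ncount H L in nL hrho *.
pose rho : R := (n%:R / k%:R)%R.
have k0 : (0 < k%:R :> R)%R by rewrite ltr0n.
have n0 : (0 < n%:R :> R)%R by rewrite ltr0n.
have rho0 : (0 < rho)%R by rewrite divr_gt0.
have hcv : (fun p : nat => exu R u p H F * ((p%:R)^-1)%:E) @ \oo --> rho%:E.
  have hP : Pu R u H F = rho%:E by rewrite -hrho.
  case: (pselect (cvgn (fun p : nat => exu R u p H F * ((p%:R)^-1)%:E))) => hc.
  - by apply: cvg_toP hc _; rewrite -hP.
  - move: hP; rewrite /Pu (dvgP hc) => hP.
    have h0 : (0%:E : \bar R) = rho%:E := hP.
    by move: rho0; case: h0 => <-; rewrite ltxx.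
have hU := @keyU R u H F rho u0 hFc hH hcv.
have hup : forall p, (0 < p)%N -> exu R u p H F <= (rho * p%:R)%:E.
  move=> p p0; apply: exu_le; first by rewrite mulr_ge0 // ltW.
  move=> G hG hk; exact: hU G p hG hk p0.
pose Gp p := gunion (copies (p %/ k) L) (copies (p %% k) (Kgraph u)).
have hGpF : forall p, Ffree F (Gp p).
  by move=> p; apply: Ffree_union => //; apply: Ffree_copies.
have hGpk : forall p, ku u (Gp p) = p.
  move=> p; rewrite ku_union // !ku_copies // ku_K // muln1 -/k.
  exact: (esym (divn_eq p k)).
have hGpN : forall p, (p %/ k * n <= Ncount H (Gp p))%N.
  move=> p; apply: leq_trans (N_union_ge _ _ _); exact: N_copies_ge.
have hlo : forall p, ((Ncount H (Gp p))%:R)%:E <= exu R u p H F.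
  by move=> p; apply: exu_ge; [exact: hGpF | exact: hGpk].
have hdata : forall p, (k <= p)%N -> exists y : R, exu R u p H F = y%:E /\
   [/\ (1 <= (p %/ k)%:R :> R)%R, (0 <= (p %% k)%:R :> R)%R, ((p %% k)%:R <= k%:R :> R)%R,
       ((p %/ k)%:R * n%:R <= (Ncount H (Gp p))%:R :> R)%R &
       ((Ncount H (Gp p))%:R <= y)%R /\
       (y <= n%:R / k%:R * ((p %/ k)%:R * k%:R + (p %% k)%:R))%R].
  move=> p hp.
  have p0 : (0 < p)%N by apply: leq_trans hp.
  have [y [hy /andP [h1 h2]]] := @bracket R _ _ _ (hlo p) (hup p p0).
  exists y; split => //; split.
  - by rewrite ler1n leq_divRL // mul1n.
  - by rewrite ler0n.
  - by rewrite ler_nat ltnW // ltn_pmod.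
  - by rewrite -natrM ler_nat.
  split; first by [].
  - by move: h2; rewrite /rho -natrM -natrD -divn_eq.
split.
- apply: cvg_EFin.
    exists k => // p /= hp.
    have [y [hy _]] := hdata p hp.
    by rewrite hy -EFinM.
  apply: (@sq_cvg R _ k) => // p hp.
  have [y [hy [q1 r0 rk qM [My yD]]]] := hdata p hp.
  rewrite /= hy -EFinM /=.
  have [] := @ratio_bounds R _ _ _ _ _ _ n0 k0 q1 r0 rk qM My yD.
  by move=> h _; exact: h.
- apply: cvg_EFin.
    exists k => // p /= hp.
    have [y [hy _]] := hdata p hp.
    by rewrite hy -EFinM.
  apply: (@sq_cvg R _ k) => // p hp.
  have [y [hy [q1 r0 rk qM [My yD]]]] := hdata p hp.
  rewrite /= hy -EFinM /=.
  have [] := @ratio_bounds R _ _ _ _ _ _ n0 k0 q1 r0 rk qM My yD.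
  have -> : (n%:R / k%:R * p%:R = n%:R / k%:R * ((p %/ k)%:R * k%:R + (p %% k)%:R) :> R)%R.
    by rewrite -natrM -natrD -divn_eq.
  by move=> _ h; exact: h.
- move=> p p0 /dvdnP [q hq].
  have hqd : (p %/ k)%N = q by rewrite hq mulnK.
  rewrite hqd; apply/le_anti/andP; split.
  + apply: le_trans (hup p p0) _; rewrite lee_fin.
    have h := @N_copies_ge H L q hH.
    apply: le_trans (_ : ((q * n)%N%:R <= _)%R); last by rewrite ler_nat.
    rewrite /rho hq !natrM le_eqVlt; apply/orP; left; apply/eqP; field.
    by rewrite pnatr_eq0 -lt0n.
  + apply: exu_ge; first exact: Ffree_copies.
    by rewrite ku_copies // -hq.
Qed.
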